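(* The binary trees $\{T_n\}_{n=1}^\infty$ do not admit uniformly bilipschitz embeddings into the diamonds $\{D_n\}_{n=1}^\infty$. That is, there do not exist $K<\infty$, numbers $m(n)\in\mathbb{N}$ and maps $f_n:V(T_n)\to V(D_{m(n)})$ ($n\in\mathbb{N}$) such that each $f_n$ is a bilipschitz embedding with distortion at most $K$.
   Context: $T_n$ (binary tree of depth $n$): vertices are all finite $0$-$1$ sequences of length at most $n$ (including the empty sequence); two vertices are adjacent if one sequence is obtained from the other by adding one term on the right. Diamonds: $D_0$ has two vertices joined by an edge; $D_i$ is obtained from $D_{i-1}$ by replacing each edge $uv$ by a quadrilateral $u,a,v,b$ (with new vertices $a,b$). Both are regarded as metric spaces on their vertex sets with the shortest path metric, each edge having length $1$. The distortion of a bilipschitz map $f$ is $\mathrm{Lip}(f)\cdot\mathrm{Lip}(f^{-1})$. *)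

(* Defs.v *)
From Stdlib Require Import Reals List Arith.
Import ListNotations.
Open Scope R_scope.

Inductive walk {V : Type} (adj : V -> V -> Prop) : V -> V -> nat -> Prop :=
| walk_nil : forall x, walk adj x x 0
| walk_cons : forall x y z k, adj x y -> walk adj y z k -> walk adj x z (S k).

Definition graph_dist {V : Type} (adj : V -> V -> Prop) (x y : V) (d : nat) : Prop :=
  walk adj x y d /\ (forall k, walk adj x y k -> (d <= k)%nat).

Record graph := { vtype : Type; vert : vtype -> Prop; adj : vtype -> vtype -> Prop }.

Definition tree_adj (n : nat) (u v : list bool) : Prop :=
  (length u <= n)%nat /\ (length v <= n)%nat /\
  exists b : bool, v = u ++ [b] \/ u = v ++ [b].

Definition tree (n : nat) : graph :=
  {| vtype := list bool; vert := fun u => (length u <= n)%nat; adj := tree_adj n |}.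

(* D_0 = {0,1} with edge 01.
   D_i: the k-th edge (u,v) of D_{i-1} is replaced by the quadrilateral
   u,a,v,b with new vertices a = N + 2k, b = N + 2k + 1 (N = #vertices of D_{i-1}). *)
Fixpoint quad_edges (N k : nat) (es : list (nat * nat)) : list (nat * nat) :=
  match es with
  | [] => []
  | (u, v) :: es' =>
      let a := (N + 2 * k)%nat in let b := (N + 2 * k + 1)%nat in
      (u, a) :: (a, v) :: (v, b) :: (b, u) :: quad_edges N (S k) es'
  end.

Fixpoint diamond_data (i : nat) : nat * list (nat * nat) :=
  match i with
  | O => (2%nat, [(0%nat, 1%nat)])
  | S i' => let (N, es) := diamond_data i' in
            ((N + 2 * length es)%nat, quad_edges N 0 es)
  end.

Definition diamond (i : nat) : graph :=
  {| vtype := nat;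
     vert := fun x => (x < fst (diamond_data i))%nat;
     adj := fun x y => In (x, y) (snd (diamond_data i)) \/ In (y, x) (snd (diamond_data i)) |}.

Definition bilip_dist_le (G H : graph) (f : vtype G -> vtype H) (K : R) : Prop :=
  (forall x, vert G x -> vert H (f x)) /\
  exists L1 L2 : R, 0 < L1 /\ 0 < L2 /\ L1 * L2 <= K /\
    forall x y (d1 d2 : nat), vert G x -> vert G y ->
      graph_dist (adj G) x y d1 -> graph_dist (adj H) (f x) (f y) d2 ->
      INR d2 <= L1 * INR d1 /\ INR d1 <= L2 * INR d2.

(* Main.v *)
Require Import Defs.
From Stdlib Require Import Reals List Arith Lia Lra Psatz Classical ZArith Bool.
Import ListNotations.
Open Scope R_scope.
Open Scope R_scope.

Lemma walk_app {V} (a: V->V->Prop) x y z k l :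
  walk a x y k -> walk a y z l -> walk a x z (k+l).
Proof. induction 1; intros; simpl; auto. econstructor; eauto. Qed.

Lemma walk_one {V} (a: V->V->Prop) x y : a x y -> walk a x y 1.
Proof. intros; econstructor; eauto; constructor. Qed.

Lemma walk_rev {V} (a:V->V->Prop) (Hs: forall x y, a x y -> a y x) x y k :
  walk a x y k -> walk a y x k.
Proof.
  induction 1. constructor.
  replace (S k) with (k+1)%nat by lia. apply walk_app with y; auto.
  apply walk_one; auto.
Qed.

Lemma walk_0 {V} (a:V->V->Prop) x y : walk a x y 0 -> x = y.
Proof. intros H; inversion H; auto. Qed.

Lemma dist_exists {V} (a: V->V->Prop) x y k :
  walk a x y k -> exists d, graph_dist a x y d /\ (d <= k)%nat.
Proof.
  revert k. intro k. induction k as [k IH] using lt_wf_ind. intros Hw.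
  destruct (classic (exists k', (k' < k)%nat /\ walk a x y k')) as [[k' [Hk Hw']]|Hn].
  - destruct (IH k' Hk Hw') as [d [Hd Hdk]]. exists d; split; auto; lia.
  - exists k; split; [split; auto|lia].
    intros k' Hk'. destruct (le_lt_dec k k'); auto. exfalso; apply Hn; eauto.
Qed.

Definition Nd i := fst (diamond_data i).
Definition Es i := snd (diamond_data i).
Definition adjd m x y := In (x,y) (Es m) \/ In (y,x) (Es m).

Lemma adjd_sym m x y : adjd m x y -> adjd m y x.
Proof. unfold adjd; tauto. Qed.

Lemma Nd_S i : Nd (S i) = (Nd i + 2 * length (Es i))%nat.
Proof. unfold Nd, Es; simpl. destruct (diamond_data i); reflexivity. Qed.
Lemma Es_S i : Es (S i) = quad_edges (Nd i) 0 (Es i).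
Proof. unfold Nd, Es; simpl. destruct (diamond_data i); reflexivity. Qed.
Lemma Nd_0 : Nd 0 = 2%nat. Proof. reflexivity. Qed.
Lemma Es_0 : Es 0 = [(0%nat,1%nat)]. Proof. reflexivity. Qed.

Lemma quad_in es : forall N k x y, In (x,y) (quad_edges N k es) <->
  exists i u v, nth_error es i = Some (u,v) /\
   ((x = u /\ y = N+2*(k+i)) \/ (x = N+2*(k+i) /\ y = v) \/
    (x = v /\ y = N+2*(k+i)+1) \/ (x = N+2*(k+i)+1 /\ y = u))%nat.
Proof.
  induction es as [|[u v] es IH]; intros N k x y; simpl.
  - split; [tauto|]. intros [i [u [v [H _]]]]. destruct i; discriminate.
  - split.
    + intros [H|[H|[H|[H|H]]]].
      * exists 0%nat, u, v; split; auto. inversion H; left; split; auto; lia.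
      * exists 0%nat, u, v; split; auto. inversion H; right; left; split; auto; lia.
      * exists 0%nat, u, v; split; auto. inversion H; right; right; left; split; auto; lia.
      * exists 0%nat, u, v; split; auto. inversion H; right; right; right; split; auto; lia.
      * apply IH in H. destruct H as [i [u' [v' [Hi H]]]].
        exists (S i), u', v'; split; auto. simpl.
        replace (k + S i)%nat with (S k + i)%nat by lia. exact H.
    + intros [i [u' [v' [Hi H]]]]. destruct i as [|i]; simpl in Hi.
      * inversion Hi; subst. rewrite Nat.add_0_r in H.
        destruct H as [[-> ->]|[[-> ->]|[[-> ->]|[-> ->]]]]; auto.
      * right; right; right; right. apply IH. exists i, u', v'; split; auto.
        replace (S k + i)%nat with (k + S i)%nat by lia. exact H.
Qed.

Lemma Eb1 i : forall x y, In (x,y) (Es i) -> (x < Nd i /\ y < Nd i)%nat.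
Proof.
  induction i; intros x y H.
  - rewrite Es_0 in H; rewrite Nd_0. destruct H as [H|[]]. inversion H; lia.
  - rewrite Es_S, quad_in in H. rewrite Nd_S.
    destruct H as [k [u [v [Hk H]]]].
    assert (k < length (Es i))%nat by (apply nth_error_Some; congruence).
    apply nth_error_In in Hk. apply IHi in Hk. lia.
Qed.

Lemma adjd_lt m x y : adjd m x y -> (x < Nd m /\ y < Nd m)%nat.
Proof. intros [H|H]; apply Eb1 in H; lia. Qed.

Lemma Eb3 m x y : adjd (S m) x y ->
  ((x < Nd m /\ Nd m <= y) \/ (Nd m <= x /\ y < Nd m))%nat.
Proof.
  intros [H|H]; rewrite Es_S, quad_in in H; destruct H as [k [u [v [Hk H]]]];
  apply nth_error_In in Hk; apply Eb1 in Hk; lia.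
Qed.

Lemma Eb4 m a z : adjd (S m) a z -> (Nd m <= a)%nat ->
  exists i u v, nth_error (Es m) i = Some (u,v) /\
   (a = Nd m + 2*i \/ a = Nd m + 2*i + 1)%nat /\ (z = u \/ z = v).
Proof.
  intros [H|H] Ha; rewrite Es_S, quad_in in H; destruct H as [k [u [v [Hk H]]]];
  exists k, u, v; split; auto; pose proof (Eb1 _ _ _ (nth_error_In _ _ Hk)); lia.
Qed.

Lemma div2_cases a i : (a = 2*i \/ a = 2*i+1)%nat -> Nat.div2 a = i.
Proof.
  intros [->| ->]. apply Nat.div2_double.
  replace (2*i+1)%nat with (S (2*i)) by lia. apply Nat.div2_succ_double.
Qed.

Lemma Eb4' m a : (Nd m <= a < Nd (S m))%nat ->
  exists u v, nth_error (Es m) (Nat.div2 (a - Nd m)) = Some (u,v) /\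
   adjd (S m) a u /\ adjd (S m) a v.
Proof.
  intros Ha. rewrite Nd_S in Ha. set (i := Nat.div2 (a - Nd m)).
  pose proof (Nat.div2_odd (a - Nd m)) as Hd. fold i in Hd.
  assert (Hi : (i < length (Es m))%nat) by (destruct (Nat.odd (a - Nd m)); simpl in Hd; lia).
  apply nth_error_Some in Hi. destruct (nth_error (Es m) i) as [[u v]|] eqn:E; [|congruence].
  exists u, v; split; auto. unfold adjd; rewrite !Es_S, !quad_in.
  destruct (Nat.odd (a - Nd m)); simpl in Hd.
  - split; [left|right]; exists i, u, v; split; auto; lia.
  - split; [right|left]; exists i, u, v; split; auto; lia.
Qed.

Lemma Eb5 m u v : In (u,v) (Es m) -> exists a, In (u,a) (Es (S m)) /\ In (a,v) (Es (S m)).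
Proof.
  intros H. apply In_nth_error in H. destruct H as [i Hi].
  exists (Nd m + 2*i)%nat. rewrite Es_S, !quad_in. split; exists i, u, v; split; auto; lia.
Qed.

Lemma lift m x y k : walk (adjd m) x y k -> walk (adjd (S m)) x y (2*k).
Proof.
  induction 1. constructor.
  replace (2 * S k)%nat with (2 + 2*k)%nat by lia. apply walk_app with y; auto.
  destruct H as [H|H]; destruct (Eb5 _ _ _ H) as [a [H1 H2]].
  - econstructor. left; exact H1. apply walk_one. left; exact H2.
  - econstructor. right; exact H2. apply walk_one. right; exact H1.
Qed.

Lemma lift_d m d x y k : walk (adjd m) x y k -> walk (adjd (m+d)) x y (2^d*k).
Proof.
  induction d; intros H. rewrite Nat.add_0_r; simpl; rewrite Nat.add_0_r; auto.
  replace (m + S d)%nat with (S (m+d)) by lia.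
  replace (2 ^ S d * k)%nat with (2 * (2^d*k))%nat by (simpl; lia). apply lift; auto.
Qed.

Lemma Nd_mono m d : (Nd m <= Nd (m + d))%nat.
Proof. induction d. rewrite Nat.add_0_r; lia. replace (m + S d)%nat with (S (m+d)) by lia. rewrite Nd_S; lia. Qed.
Open Scope nat_scope.

Definition Inv j d (B : nat -> nat*nat) : Prop :=
 forall u, (Nd j <= u < Nd (j+d))%nat ->
  (fst (B u) < Nd j)%nat /\ (snd (B u) < Nd j)%nat /\
  (exists k, walk (adjd (j+d)) u (fst (B u)) k /\ (k+1 <= 2^d)%nat) /\
  (exists k, walk (adjd (j+d)) u (snd (B u)) k /\ (k+1 <= 2^d)%nat) /\
  (forall w, adjd (j+d) u w -> (Nd j <= w)%nat -> B w = B u) /\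
  (forall w, adjd (j+d) u w -> (w < Nd j)%nat -> w = fst (B u) \/ w = snd (B u)).

Definition Bstep j m (B : nat -> nat*nat) (a : nat) : nat*nat :=
  if a <? Nd m then B a else
  let (u,v) := nth (Nat.div2 (a - Nd m)) (Es m) (0,0)%nat in
  if Nd j <=? u then B u else if Nd j <=? v then B v else (u,v).

Lemma creator m a : (Nd m <= a < Nd (S m))%nat ->
  exists u v, nth (Nat.div2 (a - Nd m)) (Es m) (0,0)%nat = (u,v) /\
   In (u,v) (Es m) /\ adjd (S m) a u /\ adjd (S m) a v /\
   (forall w, adjd (S m) a w -> w = u \/ w = v).
Proof.
  intros Ha. destruct (Eb4' m a Ha) as [u [v [Hn [H1 H2]]]].
  exists u, v. split; [apply nth_error_nth; auto|]. split; [eapply nth_error_In; eauto|].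
  split; auto; split; auto. intros w Hw.
  destruct (Eb4 m a w Hw (proj1 Ha)) as [i [u' [v' [Hi [Ha' Hw']]]]].
  assert (Nat.div2 (a - Nd m) = i) by (apply div2_cases; lia). subst i. congruence.
Qed.

Lemma Inv_ex j d : exists B, Inv j d B.
Proof.
  induction d.
  - exists (fun _ => (0,0)%nat). intros u Hu. rewrite Nat.add_0_r in Hu. lia.
  - destruct IHd as [B HB]. exists (Bstep j (j+d) B).
    set (m := (j+d)%nat) in *.
    assert (Hjm : (Nd j <= Nd m)%nat) by apply Nd_mono.
    unfold Inv; replace (j + S d)%nat with (S m) by (unfold m; lia).
    assert (Hnew : forall a, (Nd m <= a < Nd (S m))%nat ->
       (fst (Bstep j m B a) < Nd j)%nat /\ (snd (Bstep j m B a) < Nd j)%nat /\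
       (exists k, walk (adjd (S m)) a (fst (Bstep j m B a)) k /\ (k+1 <= 2^S d)%nat) /\
       (exists k, walk (adjd (S m)) a (snd (Bstep j m B a)) k /\ (k+1 <= 2^S d)%nat) /\
       (forall w, adjd (S m) a w -> (Nd j <= w)%nat -> Bstep j m B w = Bstep j m B a) /\
       (forall w, adjd (S m) a w -> (w < Nd j)%nat ->
            w = fst (Bstep j m B a) \/ w = snd (Bstep j m B a))).
    { intros a Ha. destruct (creator m a Ha) as [u [v [Hn [Hin [Hau [Hav Hw]]]]]].
      assert (Huv : (u < Nd m /\ v < Nd m)%nat) by (apply Eb1; auto).
      assert (Hadj : adjd m u v) by (left; auto).
      assert (HBa : Bstep j m B a = if Nd j <=? u then B u else if Nd j <=? v then B v else (u,v)).
      { unfold Bstep. destruct (Nat.ltb_spec a (Nd m)); [lia|]. rewrite Hn. reflexivity. }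
      assert (HBw : forall w, (w < Nd m)%nat -> Bstep j m B w = B w).
      { intros w Hw'. unfold Bstep. destruct (Nat.ltb_spec w (Nd m)); [auto|lia]. }
      rewrite HBa.
      destruct (Nat.leb_spec (Nd j) u) as [Hu|Hu].
      + destruct (HB u (conj Hu (proj1 Huv))) as [B1 [B2 [[k1 [W1 K1]] [[k2 [W2 K2]] [B5 B6]]]]].
        split; auto. split; auto. split.
        { exists (1 + 2*k1)%nat; split. apply walk_app with u. apply walk_one; auto. apply lift; auto.
          simpl; lia. }
        split.
        { exists (1 + 2*k2)%nat; split. apply walk_app with u. apply walk_one; auto. apply lift; auto.
          simpl; lia. }
        split.
        * intros w Haw Hjw. destruct (Hw w Haw) as [->| ->]; rewrite HBw by lia; auto.
        * intros w Haw Hjw. destruct (Hw w Haw) as [->| ->]; [lia|]. apply B6; auto.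
      + destruct (Nat.leb_spec (Nd j) v) as [Hv|Hv].
        * destruct (HB v (conj Hv (proj2 Huv))) as [B1 [B2 [[k1 [W1 K1]] [[k2 [W2 K2]] [B5 B6]]]]].
          split; auto. split; auto. split.
          { exists (1 + 2*k1)%nat; split. apply walk_app with v. apply walk_one; auto. apply lift; auto.
            simpl; lia. }
          split.
          { exists (1 + 2*k2)%nat; split. apply walk_app with v. apply walk_one; auto. apply lift; auto.
            simpl; lia. }
          split.
          -- intros w Haw Hjw. destruct (Hw w Haw) as [->| ->]; [lia|]. rewrite HBw by lia; auto.
          -- intros w Haw Hjw. destruct (Hw w Haw) as [->| ->]; [|lia]. apply B6; auto. apply adjd_sym; auto.
        * simpl. split; auto. split; auto. split.
          { exists 1%nat; split. apply walk_one; auto. simpl. pose proof (Nat.pow_nonzero 2 d). lia. }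
          split.
          { exists 1%nat; split. apply walk_one; auto. simpl. pose proof (Nat.pow_nonzero 2 d). lia. }
          split.
          -- intros w Haw Hjw. destruct (Hw w Haw) as [->| ->]; lia.
          -- intros w Haw Hjw. auto. }
    intros a Ha. destruct (Nat.ltb_spec a (Nd m)) as [Hlt|Hge].
    + assert (HBa : Bstep j m B a = B a) by (unfold Bstep; destruct (Nat.ltb_spec a (Nd m)); [auto|lia]).
      rewrite HBa.
      destruct (HB a (conj (proj1 Ha) Hlt)) as [B1 [B2 [[k1 [W1 K1]] [[k2 [W2 K2]] [B5 B6]]]]].
      split; auto. split; auto. split.
      { exists (2*k1)%nat; split. apply lift; auto. simpl; lia. }
      split.
      { exists (2*k2)%nat; split. apply lift; auto. simpl; lia. }
      split.
      * intros w Haw Hjw. destruct (Eb3 _ _ _ Haw) as [[_ Hw]|[Hw _]]; [|lia].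
        pose proof (adjd_lt _ _ _ Haw).
        destruct (Hnew w ltac:(lia)) as [_ [_ [_ [_ [H5 _]]]]].
        rewrite <- HBa. symmetry. apply H5; auto. apply adjd_sym; auto. lia.
      * intros w Haw Hjw. destruct (Eb3 _ _ _ Haw); lia.
    + apply Hnew. lia.
Qed.
Open Scope nat_scope.

Lemma Sep j d B : Inv j d B -> forall k u w, walk (adjd (j+d)) u w k -> Nd j <= u ->
  (Nd j <= w /\ B w = B u) \/
  exists g k', (g = fst (B u) \/ g = snd (B u)) /\ walk (adjd (j+d)) u g k' /\ k' <= k.
Proof.
  intros HB k u w H. induction H as [x|x z y k Hxz Hw IH]; intros Hu.
  - left; auto.
  - pose proof (adjd_lt _ _ _ Hxz) as Hl.
    destruct (HB x (conj Hu (proj1 Hl))) as [_ [_ [_ [_ [B5 B6]]]]].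
    destruct (le_lt_dec (Nd j) z) as [Hz|Hz].
    + rewrite <- (B5 z Hxz Hz). destruct (IH Hz) as [H|[g [k' [Hg [Hw' Hk]]]]]; [left; auto|].
      right. exists g, (1+k'); split; auto. split; [|lia]. apply walk_app with z; auto. apply walk_one; auto.
    + right. exists z, 1; split; [apply B6; auto|]. split; [apply walk_one; auto|lia].
Qed.

Lemma proj_walk m : forall k x y, x < Nd m -> y < Nd m -> walk (adjd (S m)) x y k ->
  exists k', walk (adjd m) x y k' /\ 2*k' <= k.
Proof.
  intro k. induction k as [k IH] using lt_wf_ind. intros x y Hx Hy H.
  inversion H as [|x0 z y0 k1 Hxz Hzy]; subst.
  - exists 0; split; [constructor|lia].
  - destruct (Eb3 _ _ _ Hxz) as [[_ Hz]|[Hx' _]]; [|lia].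
    inversion Hzy as [|z0 w y1 k2 Hzw Hwy]; subst; [lia|].
    destruct (Eb3 _ _ _ Hzw) as [[Hz' _]|[_ Hw]]; [lia|].
    pose proof (adjd_lt _ _ _ Hzw) as Hzl.
    destruct (creator m z (conj Hz (proj1 Hzl))) as [u [v [_ [Hin [_ [_ Hc]]]]]].
    destruct (IH k2 ltac:(lia) w y Hw Hy Hwy) as [k' [Hk' Hle]].
    assert (Hx1 : x = u \/ x = v) by (apply Hc; apply adjd_sym; auto).
    assert (Hw1 : w = u \/ w = v) by (apply Hc; auto).
    assert (Hs : x = w \/ adjd m x w).
    { destruct Hx1 as [->| ->]; destruct Hw1 as [->| ->]; auto; right; unfold adjd; auto. }
    destruct Hs as [<-|Hs].
    + exists k'; split; auto; lia.
    + exists (1+k'); split; [|lia]. apply walk_app with w; auto. apply walk_one; auto.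
Qed.

Lemma gate_sep j : forall d g g' k, g < Nd j -> g' < Nd j -> g <> g' ->
  walk (adjd (j+d)) g g' k -> 2^d <= k.
Proof.
  induction d; intros g g' k Hg Hg' Hne H.
  - simpl. destruct k; [|lia]. apply walk_0 in H; contradiction.
  - replace (j + S d) with (S (j+d)) in H by lia.
    pose proof (Nd_mono j d).
    destruct (proj_walk (j+d) k g g' ltac:(lia) ltac:(lia) H) as [k' [Hk' Hle]].
    pose proof (IHd g g' k' Hg Hg' Hne Hk'). simpl; lia.
Qed.

Lemma conn0 m u : u < Nd m -> exists k, walk (adjd m) u 0 k /\ k <= 2^(m+1).
Proof.
  intros Hu.
  assert (W10 : walk (adjd m) 1 0 (2^m)).
  { replace (2^m) with (2^m*1) by lia. change m with (0+m). apply lift_d.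
    apply walk_one. right. rewrite Es_0. left; reflexivity. }
  assert (Hp : 2^(m+1) = 2*2^m) by (rewrite Nat.pow_add_r; simpl; lia).
  destruct (Inv_ex 0 m) as [B HB].
  destruct (le_lt_dec 2 u) as [H2|H2].
  - destruct (HB u (conj H2 Hu)) as [B1 [_ [[k1 [W1 K1]] _]]].
    simpl in W1. rewrite Nd_0 in B1.
    destruct (fst (B u)) as [|[|g]] eqn:E; [| |unfold Nd in B1; simpl in B1; lia].
    + exists k1; split; auto; lia.
    + exists (k1 + 2^m); split. apply walk_app with 1; auto. lia.
  - destruct u as [|[|u]]; [| |lia].
    + exists 0; split; [constructor|lia].
    + exists (2^m); split; auto; lia.
Qed.

Lemma conn m u v : u < Nd m -> v < Nd m -> exists k, walk (adjd m) u v k /\ k <= 2^(m+2).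
Proof.
  intros Hu Hv. destruct (conn0 m u Hu) as [k1 [W1 K1]]. destruct (conn0 m v Hv) as [k2 [W2 K2]].
  exists (k1+k2); split. apply walk_app with 0; auto. apply walk_rev; auto. apply adjd_sym.
  rewrite (Nat.pow_add_r 2 m 2), (Nat.pow_add_r 2 m 1) in *. simpl in *. lia.
Qed.
Open Scope nat_scope.

Lemma tadj_snoc n u b : length u + 1 <= n -> tree_adj n u (u ++ [b]).
Proof. intros H. repeat split; try (rewrite length_app; simpl); try lia. exists b; auto. Qed.

Lemma tadj_sym n u v : tree_adj n u v -> tree_adj n v u.
Proof. intros [H1 [H2 [b [H|H]]]]; repeat split; auto; exists b; auto. Qed.

Lemma tree_lip n (g : list bool -> nat)
  (Hg : forall u b, g u <= g (u++[b]) + 1 /\ g (u++[b]) <= g u + 1) :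
  forall u v k, walk (tree_adj n) u v k -> g u <= g v + k /\ g v <= g u + k.
Proof.
  induction 1 as [|x y z k H W IH]; [lia|].
  destruct H as [_ [_ [b [E|E]]]]; [pose proof (Hg x b)|pose proof (Hg y b)]; subst; lia.
Qed.

Lemma len_lip n u v k : walk (tree_adj n) u v k -> length u <= length v + k /\ length v <= length u + k.
Proof. apply tree_lip. intros; rewrite length_app; simpl; lia. Qed.

Fixpoint pre (l u : list bool) : bool :=
  match l, u with
  | [], _ => true
  | a::l', b::u' => Bool.eqb a b && pre l' u'
  | _::_, [] => false
  end.

Lemma pre_app l r : pre l (l ++ r) = true.
Proof. induction l; simpl; auto. rewrite eqb_reflx; auto. Qed.

Lemma pre_len l u : pre l u = true -> length l <= length u.
Proof. revert u; induction l; intros [|b u]; simpl; try discriminate; try lia.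
  intros H; apply andb_true_iff in H; destruct H as [_ H]; apply IHl in H; lia. Qed.

Lemma pre_mono l u b : pre l u = true -> pre l (u++[b]) = true.
Proof. revert u; induction l; intros [|c u]; simpl; try discriminate; auto.
  intros H; apply andb_true_iff in H; destruct H as [H1 H]; rewrite H1; simpl; auto. Qed.

Lemma pre_snoc l u b : pre l (u++[b]) = true -> pre l u = true \/ l = u ++ [b].
Proof.
  revert u; induction l as [|a l IH]; intros [|c u]; simpl; auto; intros H.
  - apply andb_true_iff in H; destruct H as [H1 H]. apply eqb_prop in H1; subst.
    destruct l; simpl in H; auto; try discriminate.
  - apply andb_true_iff in H; destruct H as [H1 H]. apply eqb_prop in H1; subst.
    rewrite eqb_reflx; simpl. destruct (IH u H) as [H'|H']; auto. right; congruence.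
Qed.

Lemma pre_diff x b b' r : pre (x ++ [b]) (x ++ b' :: r) = Bool.eqb b b'.
Proof. induction x; simpl; auto. rewrite andb_true_r; auto. rewrite eqb_reflx; auto. Qed.

Lemma pre_short l u : length u < length l -> pre l u = false.
Proof. intros H. destruct (pre l u) eqn:E; auto. apply pre_len in E; lia. Qed.

Definition phi l u := if pre l u then length u - length l + 1 else 0.

Lemma phi_lip n l u v k : walk (tree_adj n) u v k -> phi l u <= phi l v + k /\ phi l v <= phi l u + k.
Proof.
  apply tree_lip. intros u' b. unfold phi.
  destruct (pre l u') eqn:E1.
  - rewrite (pre_mono _ _ _ E1). pose proof (pre_len _ _ E1). rewrite length_app; simpl; lia.
  - destruct (pre l (u' ++ [b])) eqn:E2; [|lia].
    destruct (pre_snoc _ _ _ E2) as [H|H]; [congruence|]. subst. lia.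
Qed.

Lemma phi_app l r : phi l (l ++ r) = length r + 1.
Proof. unfold phi. rewrite pre_app, length_app. lia. Qed.

Lemma chain_walk n (h : nat -> list bool) N :
  (forall i, i < N -> tree_adj n (h i) (h (S i))) -> forall i, i <= N -> walk (tree_adj n) (h 0) (h i) i.
Proof.
  intros H i. induction i; intros Hi. constructor.
  replace (S i) with (i + 1) at 2 by lia. apply walk_app with (h i). apply IHi; lia.
  apply walk_one. apply H; lia.
Qed.

Definition xs s := repeat false s.
Definition alpha s i := xs s ++ repeat false i.
Definition beta s i := match i with 0 => xs s | S i' => xs s ++ true :: repeat false i' end.
Definition gamma s i := repeat false (s - i).

Lemma len_xs s : length (xs s) = s. Proof. apply repeat_length. Qed.

Lemma snoc_rep i : repeat false (S i) = repeat false i ++ [false].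
Proof. simpl. apply repeat_cons. Qed.

Lemma alpha_adj n s i : s + S i <= n -> tree_adj n (alpha s i) (alpha s (S i)).
Proof.
  intros H. unfold alpha. rewrite snoc_rep, app_assoc. apply tadj_snoc.
  rewrite length_app, len_xs, repeat_length; lia.
Qed.

Lemma beta_adj n s i : s + S i <= n -> tree_adj n (beta s i) (beta s (S i)).
Proof.
  intros H. destruct i.
  - simpl. apply tadj_snoc. rewrite len_xs; lia.
  - change (tree_adj n (xs s ++ true :: repeat false i) (xs s ++ true :: repeat false (S i))).
    rewrite snoc_rep. replace (xs s ++ true :: repeat false i ++ [false]) with
      ((xs s ++ true :: repeat false i) ++ [false]) by (rewrite <- app_assoc; reflexivity).
    apply tadj_snoc. rewrite length_app, len_xs; simpl; rewrite repeat_length; lia.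
Qed.

Lemma gamma_adj n s i : S i <= s -> s <= n -> tree_adj n (gamma s i) (gamma s (S i)).
Proof.
  intros H H'. unfold gamma. apply tadj_sym. replace (s - i) with (S (s - S i)) by lia.
  rewrite snoc_rep. apply tadj_snoc. rewrite repeat_length; lia.
Qed.

Lemma len_alpha s i : length (alpha s i) = s + i.
Proof. unfold alpha; rewrite length_app, len_xs, repeat_length; lia. Qed.
Lemma len_beta s i : length (beta s i) = s + i.
Proof. destruct i; simpl. rewrite len_xs; lia. rewrite length_app, len_xs; simpl; rewrite repeat_length; lia. Qed.
Lemma len_gamma s i : length (gamma s i) = s - i.
Proof. apply repeat_length. Qed.

Lemma phiF_alpha s i : phi (xs s ++ [false]) (alpha s i) = i.
Proof.
  destruct i. unfold phi, alpha; rewrite pre_short; auto; rewrite !length_app; simpl; lia.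
  unfold alpha. simpl. replace (xs s ++ false :: repeat false i) with ((xs s ++ [false]) ++ repeat false i)
    by (rewrite <- app_assoc; reflexivity). rewrite phi_app, repeat_length; lia.
Qed.
Lemma phiF_beta s i : phi (xs s ++ [false]) (beta s i) = 0.
Proof.
  destruct i; unfold phi; simpl. rewrite pre_short; auto; rewrite !length_app; simpl; lia.
  rewrite pre_diff; reflexivity.
Qed.
Lemma phiT_beta s i : phi (xs s ++ [true]) (beta s i) = i.
Proof.
  destruct i. unfold phi; simpl; rewrite pre_short; auto; rewrite !length_app; simpl; lia.
  simpl. replace (xs s ++ true :: repeat false i) with ((xs s ++ [true]) ++ repeat false i)
    by (rewrite <- app_assoc; reflexivity). rewrite phi_app, repeat_length; lia.
Qed.
Lemma phiT_alpha s i : phi (xs s ++ [true]) (alpha s i) = 0.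
Proof.
  destruct i; unfold phi, alpha; simpl.
  rewrite pre_short; auto; rewrite !length_app; simpl; lia.
  rewrite pre_diff; reflexivity.
Qed.

Lemma lb_ab n s i i' k : walk (tree_adj n) (alpha s i) (beta s i') k -> i <= k /\ i' <= k.
Proof.
  intros W. pose proof (phi_lip n (xs s ++ [false]) _ _ _ W). pose proof (phi_lip n (xs s ++ [true]) _ _ _ W).
  rewrite phiF_alpha, phiF_beta, phiT_alpha, phiT_beta in *. lia.
Qed.
Open Scope R_scope.

Lemma nat_unb (r : R) : exists N : nat, (r < INR N)%R.
Proof.
  destruct (archimed r) as [H1 _].
  destruct (Z_le_gt_dec 0 (up r)) as [H|H].
  - exists (Z.to_nat (up r)). rewrite INR_IZR_INZ, Z2Nat.id by exact H; lra.
  - exists 0%nat. apply Z.gt_lt in H. apply IZR_lt in H. simpl. lra.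
Qed.
Lemma pow_ge_n (N : nat) : (INR N <= 2 ^ N)%R.
Proof. induction N. simpl; lra. rewrite S_INR. simpl. assert (1 <= 2^N)%R by (apply pow_R1_Rle; lra). lra. Qed.
Lemma pow_choice (z : R) : (1 <= z)%R -> exists M : nat, (z < 2^M /\ 2^M <= 2*z)%R.
Proof.
  intros Hz. destruct (nat_unb z) as [N HN].
  assert (HN2 : (z < 2^N)%R) by (pose proof (pow_ge_n N); lra).
  clear HN. induction N.
  - simpl in HN2; lra.
  - destruct (Rlt_le_dec z (2^N)) as [H|H]; auto.
    exists (S N). simpl in *. split; lra.
Qed.

Lemma INR2pow M : INR (2^M) = 2^M.
Proof. rewrite pow_INR. simpl. f_equal. Qed.

Definition arm (t s i : nat) : list bool :=
  match t with 0%nat => alpha s i | 1%nat => beta s i | _ => gamma s i end.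

Lemma arm0 t s : arm t s 0 = xs s.
Proof. destruct t as [|[|t]]; simpl. unfold alpha; simpl; apply app_nil_r. reflexivity.
  unfold gamma, xs. rewrite Nat.sub_0_r; reflexivity. Qed.

Lemma len_arm t s i : (i <= s)%nat -> (length (arm t s i) <= s + i)%nat /\ (s - i <= length (arm t s i))%nat.
Proof. intros. destruct t as [|[|t]]; simpl; [rewrite len_alpha|rewrite len_beta|rewrite len_gamma]; lia. Qed.

Lemma arm_adj n t s Q i : (Q <= s)%nat -> (s + Q <= n)%nat -> (i < Q)%nat ->
  tree_adj n (arm t s i) (arm t s (S i)).
Proof. intros. destruct t as [|[|t]]; simpl; [apply alpha_adj|apply beta_adj|apply gamma_adj]; lia. Qed.

Lemma arm_walk n t s Q i : (Q <= s)%nat -> (s + Q <= n)%nat -> (i <= Q)%nat ->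
  walk (tree_adj n) (xs s) (arm t s i) i.
Proof. intros. rewrite <- (arm0 t s). apply chain_walk with Q; auto. intros; apply arm_adj with Q; auto. Qed.

Lemma arm_far n t s Q k : (Q <= s)%nat -> walk (tree_adj n) (xs s) (arm t s Q) k -> (Q <= k)%nat.
Proof.
  intros HQ W. apply len_lip in W. rewrite len_xs in W.
  destruct t as [|[|t]]; simpl in W; [rewrite len_alpha in W|rewrite len_beta in W|rewrite len_gamma in W]; lia.
Qed.

Lemma arm_pair n s t t' i i' k : (t < 3)%nat -> (t' < 3)%nat -> t <> t' -> (i <= s)%nat -> (i' <= s)%nat ->
  walk (tree_adj n) (arm t s i) (arm t' s i') k -> (i <= k)%nat.
Proof.
  intros Ht Ht' Hne Hi Hi' W.
  pose proof (len_lip _ _ _ _ W) as HL.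
  pose proof (lb_ab n s) as Hab.
  assert (W' : walk (tree_adj n) (arm t' s i') (arm t s i) k) by (apply walk_rev; auto; apply tadj_sym).
  destruct t as [|[|[|t]]]; destruct t' as [|[|[|t']]]; try lia; simpl in *;
  try (rewrite ?len_alpha, ?len_beta, ?len_gamma in HL; lia).
  - apply (Hab i i' k W).
  - apply (Hab i' i k W').
Qed.

Lemma pigeon (a b c g1 g2 : nat) : (a=g1\/a=g2) -> (b=g1\/b=g2) -> (c=g1\/c=g2) -> a=b \/ a=c \/ b=c.
Proof. lia. Qed.
Open Scope R_scope.

Lemma core (K L1 L2 : R) (n m Q : nat) (f : list bool -> nat) :
  0 < L1 -> 0 < L2 -> L1*L2 <= K ->
  8*K*(4*K+3) + 2*K*(2*K+1) < INR Q -> n = (3*Q)%nat ->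
  (forall x, (length x <= n)%nat -> (f x < Nd m)%nat) ->
  (forall x y d1 d2, (length x <= n)%nat -> (length y <= n)%nat ->
     graph_dist (tree_adj n) x y d1 -> graph_dist (adjd m) (f x) (f y) d2 ->
     INR d2 <= L1 * INR d1 /\ INR d1 <= L2 * INR d2) -> False.
Proof.
  intros HL1 HL2 HK HQ Hn Hv Hlip.
  assert (U : forall x y k, (length x <= n)%nat -> (length y <= n)%nat -> walk (tree_adj n) x y k ->
     exists k2, walk (adjd m) (f x) (f y) k2 /\ INR k2 <= L1 * INR k).
  { intros x y k Hx Hy W. destruct (dist_exists _ _ _ _ W) as [d1 [Hd1 Hk]].
    destruct (conn m (f x) (f y) (Hv x Hx) (Hv y Hy)) as [k0 [W0 _]].
    destruct (dist_exists _ _ _ _ W0) as [d2 [Hd2 _]].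
    destruct (Hlip x y d1 d2 Hx Hy Hd1 Hd2) as [H1 _].
    exists d2; split; [apply Hd2|]. apply le_INR in Hk. nra. }
  assert (Lo : forall x y k0 k b, (length x <= n)%nat -> (length y <= n)%nat -> walk (tree_adj n) x y k0 ->
     (forall k', walk (tree_adj n) x y k' -> (b <= k')%nat) -> walk (adjd m) (f x) (f y) k ->
     INR b <= L2 * INR k).
  { intros x y k0 k b Hx Hy W Hb W2. destruct (dist_exists _ _ _ _ W) as [d1 [Hd1 _]].
    destruct (dist_exists _ _ _ _ W2) as [d2 [Hd2 Hk]].
    destruct (Hlip x y d1 d2 Hx Hy Hd1 Hd2) as [_ H2].
    apply le_INR in Hk. assert (INR b <= INR d1) by (apply le_INR; apply Hb; apply Hd1). nra. }
  assert (HKp : 0 < K) by nra.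
  assert (Hxs : forall a b, (a <= b)%nat -> (b <= n)%nat -> walk (tree_adj n) (xs a) (xs b) (b - a)).
  { intros a b Hab Hbn.
    pose proof (chain_walk n (fun i => xs (a + i)) (b - a)) as C.
    simpl in C. rewrite Nat.add_0_r in C.
    assert (C' : walk (tree_adj n) (xs a) (xs (a + (b - a))) (b - a)).
    { apply C; [|lia]. intros i Hi. unfold xs. replace (a + S i)%nat with (S (a+i)) by lia.
      rewrite snoc_rep. apply tadj_snoc. rewrite repeat_length. lia. }
    replace (a + (b - a))%nat with b in C' by lia. exact C'. }
  assert (Hxsl : forall a b k, walk (tree_adj n) (xs a) (xs b) k -> (a <= b)%nat -> (b - a <= k)%nat).
  { intros a b k W _. apply len_lip in W. rewrite !len_xs in W. lia. }
  assert (HQ1 : (1 <= Q)%nat).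
  { destruct Q; [simpl in HQ; nra|lia]. }
  assert (HL1' : 1 <= L1).
  { destruct (U (xs 0) (xs 1) 1%nat) as [k2 [W2 K2]]; try (rewrite len_xs; lia).
    apply (Hxs 0 1)%nat; lia.
    assert (H1 := Lo (xs 0) (xs 1) 1%nat k2 1%nat ltac:(rewrite len_xs; lia) ltac:(rewrite len_xs; lia)
                     ltac:(apply (Hxs 0 1)%nat; lia) ltac:(intros k' W'; apply Hxsl in W'; lia) W2).
    destruct k2. simpl in H1; lra. rewrite S_INR in K2. pose proof (pos_INR k2). simpl in K2. lra. }
  set (z := L1 * (4*K+3)).
  assert (Hz1 : 1 <= z) by (unfold z; nra).
  destruct (pow_choice z Hz1) as [M [HM1 HM2]].
  assert (HL2z : L2 * 2^M <= 2*K*(4*K+3)) by (unfold z in HM2; nra).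
  assert (HnQ : INR n = 3 * INR Q) by (rewrite Hn, mult_INR; simpl; lra).
  assert (HQpos : 0 <= INR Q) by apply pos_INR.
  destruct (le_lt_dec M m) as [HMm|HMm].
  2: {
    destruct (conn m (f (xs 0)) (f (xs n)) (Hv (xs 0) ltac:(rewrite len_xs; lia)) (Hv (xs n) ltac:(rewrite len_xs; lia))) as [k [W Hk]].
    pose proof (Lo (xs 0) (xs n) (n - 0)%nat k n ltac:(rewrite len_xs; lia) ltac:(rewrite len_xs; lia)
       (Hxs 0%nat n ltac:(lia) ltac:(lia)) (fun k' W' => ltac:(apply Hxsl in W'; lia)) W) as H.
    apply le_INR in Hk; rewrite INR2pow in Hk.
    assert (2^(m+2) <= 2^(M+1)) by (apply Rle_pow; [lra|lia]).
    rewrite !pow_add in *. simpl in *.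
    assert (A1 : L2 * INR k <= L2 * (2^m * 4)) by (apply Rmult_le_compat_l; lra).
    assert (A2 : L2 * (2^m*4) <= L2 * (2^M * 2)) by (apply Rmult_le_compat_l; lra).
    assert (A3 : 0 <= K * (4*K+3)) by nra.
    clear W Hv Hlip U Lo Hxs Hxsl. unfold z in *. nra. }
  destruct (Nat.le_exists_sub M m HMm) as [j [Hj _]]. subst m.
  destruct (Inv_ex j M) as [B HB].
  set (c := L1 * (2*K+1)).
  assert (Hcz : 2*c + L1 = z) by (unfold c, z; ring).
  assert (Bad : forall s, (Q <= s <= 2*Q)%nat -> exists g k, (g < Nd j)%nat /\ walk (adjd (j+M)) (f (xs s)) g k /\ INR k <= c).
  { intros s Hs. set (v := f (xs s)).
    destruct (lt_dec v (Nd j)) as [Hvj|Hvj].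
    { exists v, 0%nat. split; auto. split; [constructor|]. simpl. unfold c; nra. }
    assert (Hvn : (Nd j <= v < Nd (j+M))%nat) by (split; [lia| apply Hv; rewrite len_xs; lia]).
    destruct (HB v Hvn) as [B1 [B2 [[k1 [W1 K1]] [[k2 [W2 K2]] [B5 B6]]]]].
    assert (Hlen : forall t i, (i <= Q)%nat -> (length (arm t s i) <= n)%nat).
    { intros t i Hi. pose proof (len_arm t s i ltac:(lia)). lia. }
    assert (Arm : forall t, exists i g k, (i <= Q)%nat /\ (g = fst (B v) \/ g = snd (B v)) /\ walk (adjd (j+M)) (f (arm t s i)) g k /\ INR k <= L1).
    { intros t.
      assert (Cl : forall i, (i <= Q)%nat -> (Nd j <= f (arm t s i) /\ B (f (arm t s i)) = B v)%nat \/
           exists i' g k, (i' <= Q)%nat /\ (g = fst (B v) \/ g = snd (B v)) /\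
              walk (adjd (j+M)) (f (arm t s i')) g k /\ INR k <= L1).
      { intro i; induction i as [|i IH]; intros Hi.
        - left. rewrite arm0. fold v. split; [lia|auto].
        - destruct (IH ltac:(lia)) as [[Hn1 HB1]|Hex]; [|right; exact Hex].
          destruct (U (arm t s i) (arm t s (S i)) 1%nat (Hlen t i ltac:(lia)) (Hlen t (S i) Hi)
              (walk_one _ _ _ (arm_adj n t s Q i ltac:(lia) ltac:(lia) ltac:(lia)))) as [k3 [W3 K3]].
          destruct (Sep j M B HB k3 _ _ W3 Hn1) as [[Hn2 HB2]|[g [k' [Hg [W' Hk']]]]].
          + left. split; auto. congruence.
          + right. exists i, g, k'. split; [lia|]. rewrite HB1 in Hg. split; auto. split; auto.
            apply le_INR in Hk'. simpl in K3. lra. }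
      destruct (Cl Q (le_n _)) as [[Hn1 HB1]|Hex]; [|exact Hex].
      exfalso.
      destruct (HB _ (conj Hn1 (Hv _ (Hlen t Q (le_n _))))) as [_ [_ [[k4 [W4 K4]] _]]].
      rewrite HB1 in W4.
      assert (W5 : walk (adjd (j+M)) v (f (arm t s Q)) (k1 + k4)).
      { apply walk_app with (fst (B v)); auto. apply walk_rev; auto. apply adjd_sym. }
      pose proof (Lo (xs s) (arm t s Q) Q (k1+k4)%nat Q ltac:(rewrite len_xs; lia) (Hlen t Q (le_n _))
         (arm_walk n t s Q Q ltac:(lia) ltac:(lia) ltac:(lia))
         (fun k' W' => arm_far n t s Q k' ltac:(lia) W') W5) as H.
      assert (Hk14 : (k1 + k4 <= 2 * 2^M)%nat) by lia.
      apply le_INR in Hk14. rewrite mult_INR, INR2pow in Hk14. simpl in Hk14.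
      nra. }
    assert (Fin : forall t t' i i' g ka kb, (t < 3)%nat -> (t' < 3)%nat -> t <> t' -> (i <= Q)%nat -> (i' <= Q)%nat ->
       (g = fst (B v) \/ g = snd (B v)) -> walk (adjd (j+M)) (f (arm t s i)) g ka -> INR ka <= L1 ->
       walk (adjd (j+M)) (f (arm t' s i')) g kb -> INR kb <= L1 ->
       exists g k, (g < Nd j)%nat /\ walk (adjd (j+M)) v g k /\ INR k <= c).
    { intros t t' i i' g ka kb Ht Ht' Hne Hi Hi' Hg Wa Ka Wb Kb.
      assert (Wab : walk (adjd (j+M)) (f (arm t s i)) (f (arm t' s i')) (ka + kb)).
      { apply walk_app with g; auto. apply walk_rev; auto. apply adjd_sym. }
      assert (Tab : walk (tree_adj n) (arm t s i) (arm t' s i') (i + i')).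
      { apply walk_app with (xs s). apply walk_rev. apply tadj_sym. apply arm_walk with Q; lia.
        apply arm_walk with Q; lia. }
      pose proof (Lo _ _ _ _ i (Hlen t i Hi) (Hlen t' i' Hi') Tab
          (fun k' W' => arm_pair n s t t' i i' k' Ht Ht' Hne ltac:(lia) ltac:(lia) W') Wab) as H.
      rewrite plus_INR in H.
      assert (Hi2 : INR i <= 2*K) by nra.
      destruct (U (xs s) (arm t s i) i ltac:(rewrite len_xs; lia) (Hlen t i Hi)
          (arm_walk n t s Q i ltac:(lia) ltac:(lia) Hi)) as [k3 [W3 K3]].
      exists g, (k3 + ka)%nat. split; [destruct Hg; subst; auto|]. split.
      apply walk_app with (f (arm t s i)); auto.
      rewrite plus_INR. unfold c. nra. }
    destruct (Arm 0%nat) as [ia [ga [ka [Ia [Ga [Wa Ka]]]]]].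
    destruct (Arm 1%nat) as [ib [gb [kb [Ib [Gb [Wb Kb]]]]]].
    destruct (Arm 2%nat) as [ic [gc [kc [Ic [Gc [Wc Kc]]]]]].
    destruct (pigeon ga gb gc (fst (B v)) (snd (B v)) Ga Gb Gc) as [E|[E|E]]; subst.
    - apply (Fin 0 1 ia ib gb ka kb)%nat; auto.
    - apply (Fin 0 2 ia ic gc ka kc)%nat; auto.
    - apply (Fin 1 2 ib ic gc kb kc)%nat; auto. }
  assert (Path : forall t, (t <= Q)%nat -> exists g, (g < Nd j)%nat /\
      (exists k, walk (adjd (j+M)) (f (xs Q)) g k /\ INR k <= c) /\
      (exists k, walk (adjd (j+M)) (f (xs (Q+t))) g k /\ INR k <= c)).
  { intro t. induction t as [|t IH]; intros Ht.
    - destruct (Bad Q ltac:(lia)) as [g [k [G [W K']]]]. exists g; split; auto.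
      rewrite Nat.add_0_r. split; exists k; auto.
    - destruct (IH ltac:(lia)) as [g [G [H1 [k2 [W2 K2]]]]].
      destruct (Bad (Q + S t)%nat ltac:(lia)) as [g' [k' [G' [W' K']]]].
      destruct (Nat.eq_dec g g') as [<-|Hne].
      + exists g; split; auto. split; auto. exists k'; auto.
      + exfalso.
        destruct (U (xs (Q+t)) (xs (Q + S t)) 1%nat ltac:(rewrite len_xs; lia) ltac:(rewrite len_xs; lia)
            ltac:(replace 1%nat with (Q + S t - (Q+t))%nat by lia; apply Hxs; lia)) as [k3 [W3 K3]].
        assert (W : walk (adjd (j+M)) g g' (k2 + (k3 + k'))).
        { apply walk_app with (f (xs (Q+t))). apply walk_rev; auto; apply adjd_sym.
          apply walk_app with (f (xs (Q+S t))); auto. }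
        pose proof (gate_sep j M g g' _ G G' Hne W) as HS.
        apply le_INR in HS. rewrite INR2pow, !plus_INR in HS. simpl in K3. lra. }
  destruct (Path Q (le_n _)) as [g [G [[k1 [W1 K1]] [k2 [W2 K2]]]]].
  assert (W : walk (adjd (j+M)) (f (xs Q)) (f (xs (Q+Q))) (k1 + k2)).
  { apply walk_app with g; auto. apply walk_rev; auto. apply adjd_sym. }
  pose proof (Lo (xs Q) (xs (Q+Q)) (Q + Q - Q)%nat (k1+k2)%nat Q ltac:(rewrite len_xs; lia) ltac:(rewrite len_xs; lia)
     (Hxs Q (Q+Q)%nat ltac:(lia) ltac:(lia)) (fun k' W' => ltac:(apply Hxsl in W'; lia)) W) as H.
  rewrite plus_INR in H. unfold c in *. nra.
Qed.
Open Scope R_scope.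

Theorem theoremT :
  ~ (exists (K : R) (m : nat -> nat) (f : forall n : nat, list bool -> nat),
       forall n : nat, (1 <= n)%nat ->
         bilip_dist_le (tree n) (diamond (m n)) (f n) K).
Proof.
  intros [K [m [f H]]].
  destruct (nat_unb (8*K*(4*K+3) + 2*K*(2*K+1))) as [Q0 HQ0].
  set (Q := S Q0).
  assert (HQ : 8*K*(4*K+3) + 2*K*(2*K+1) < INR Q) by (unfold Q; rewrite S_INR; lra).
  destruct (H (3*Q)%nat ltac:(unfold Q; lia)) as [Hv [L1 [L2 [h1 [h2 [h3 Hl]]]]]].
  apply (core K L1 L2 (3*Q)%nat (m (3*Q)%nat) Q (f (3*Q)%nat) h1 h2 h3 HQ eq_refl).
  - intros x Hx. exact (Hv x Hx).
  - intros x y d1 d2 Hx Hy D1 D2. exact (Hl x y d1 d2 Hx Hy D1 D2).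
Qed.
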